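(* If all entries $p_{i,n}$ of $P$ are positive, then $F$ is a bijection of $[0,1]$ onto $[0,1]$.
   Context: Let $(m_n)_{n\ge1}$ be finite nonnegative integers and $\tilde Q=\|q_{i,n}\|$ ($i\in\{0,\dots,m_n\}$) with $q_{i,n}>0$, $\sum_{i}q_{i,n}=1$ for all $n$, and $\prod_n q_{i_n,n}=0$ for every digit sequence $(i_n)$. Put $a_{0,n}=0$, $a_{i,n}=\sum_{l<i}q_{l,n}$; $\Delta^{\tilde Q}_{j_1j_2\dots}=a_{j_1,1}+\sum_{n\ge2}a_{j_n,n}\prod_{l<n}q_{j_l,l}$. The nega-$\tilde Q$-representation $x=\Delta^{-\tilde Q}_{i_1i_2\dots}$ means $x=\Delta^{\tilde Q}_{i_1[m_2-i_2]i_3[m_4-i_4]\dots}$; every $x\in[0,1]$ has one. Let $P=\|p_{i,n}\|$ have the same shape with $p_{i,n}\in(-1,1)$, $\sum_ip_{i,n}=1$, $\prod_n|p_{i_n,n}|=0$ for every digit sequence, $0<\sum_{i<c}p_{i,n}<1$ for $c\in\{1,\dots,m_n\}$. Put $\beta_{0,n}=0$, $\beta_{c,n}=\sum_{i<c}p_{i,n}$; for odd $n$: $\tilde p_{i,n}=p_{i,n}$, $\tilde\beta_{i,n}=\beta_{i,n}$; for even $n$: $\tilde p_{i,n}=p_{m_n-i,n}$, $\tilde\beta_{i,n}=\beta_{m_n-i,n}$. $F(x)=\beta_{i_1,1}+\sum_{k\ge2}\tilde\beta_{i_k,k}\prod_{j<k}\tilde p_{i_j,j}$ for $x=\Delta^{-\tilde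 Q}_{i_1i_2\dots}$ (independent of the representation). *)

(* Defs.v *)
From Stdlib Require Import Reals ClassicalEpsilon.
From Coquelicot Require Import Coquelicot.
Open Scope R_scope.

(* Matrices are encoded as functions  q : nat -> nat -> R,  q i n = q_{i,n};
   columns are indexed by n >= 1 (values at n = 0 are irrelevant).
   Digit sequences are functions  j : nat -> nat  (only j n for n >= 1 matter). *)

(* acc q i n = sum_{l < i} q l n  (so a_{i,n} = acc q i n, beta_{c,n} = acc p c n) *)
Fixpoint acc (q : nat -> nat -> R) (i n : nat) : R :=
  match i with
  | O => 0
  | S k => acc q k n + q k n
  end.

Fixpoint prodQ (q : nat -> nat -> R) (j : nat -> nat) (c : nat) : R :=
  match c with
  | O => 1
  | S c' => prodQ q j c' * q (j (S c')) (S c')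
  end.

Definition digits (m : nat -> nat) (j : nat -> nat) : Prop :=
  forall n, (1 <= n)%nat -> (j n <= m n)%nat.

Definition DeltaQ (q : nat -> nat -> R) (j : nat -> nat) : R :=
  acc q (j 1%nat) 1%nat
  + Series (fun k => acc q (j (k + 2)%nat) (k + 2)%nat * prodQ q j (k + 1)%nat).

(* x = Delta^{-Q}_{i1 i2 ...}  iff  x = Delta^Q_{i1 [m2-i2] i3 [m4-i4] ...} *)
Definition nega_rep (m : nat -> nat) (q : nat -> nat -> R) (i : nat -> nat) (x : R) : Prop :=
  digits m i /\
  x = DeltaQ q (fun n => if Nat.odd n then i n else (m n - i n)%nat).

Definition ptilde (m : nat -> nat) (p : nat -> nat -> R) (i n : nat) : R :=
  if Nat.odd n then p i n else p (m n - i)%nat n.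

Definition btilde (m : nat -> nat) (p : nat -> nat -> R) (i n : nat) : R :=
  if Nat.odd n then acc p i n else acc p (m n - i)%nat n.

Definition Fdigits (m : nat -> nat) (p : nat -> nat -> R) (i : nat -> nat) : R :=
  acc p (i 1%nat) 1%nat
  + Series (fun k => btilde m p (i (k + 2)%nat) (k + 2)%nat
                     * prodQ (ptilde m p) i (k + 1)%nat).

(* F(x): evaluate the formula on a (chosen) nega-Q representation of x.
   (The paper asserts the value does not depend on the chosen representation.) *)
Definition F (m : nat -> nat) (q p : nat -> nat -> R) (x : R) : R :=
  Fdigits m p (epsilon (inhabits (fun _ : nat => O)) (fun i => nega_rep m q i x)).

Definition Q_admissible (m : nat -> nat) (q : nat -> nat -> R) : Prop :=
  (forall n i, (1 <= n)%nat -> (i <= m n)%nat -> 0 < q i n) /\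
  (forall n, (1 <= n)%nat -> acc q (S (m n)) n = 1) /\
  (forall j, digits m j -> is_lim_seq (fun c => prodQ q j c) 0).

Definition P_admissible (m : nat -> nat) (p : nat -> nat -> R) : Prop :=
  (forall n i, (1 <= n)%nat -> (i <= m n)%nat -> -1 < p i n < 1) /\
  (forall n, (1 <= n)%nat -> acc p (S (m n)) n = 1) /\
  (forall j, digits m j ->
     is_lim_seq (fun c => prodQ (fun i n => Rabs (p i n)) j c) 0) /\
  (forall n c, (1 <= n)%nat -> (1 <= c)%nat -> (c <= m n)%nat ->
     0 < acc p c n < 1).

(* Main.v *)
Require Import Defs.
From Stdlib Require Import Reals.
From Coquelicot Require Import Coquelicot.
From Stdlib Require Import Lra Lia ClassicalEpsilon.
Open Scope R_scope.

Definition sM (a : nat -> nat -> R) : nat -> nat -> R := fun i n => a i (S n).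
Definition sS (j : nat -> nat) : nat -> nat := fun n => j (S n).

Definition Adm0 (m : nat -> nat) (a : nat -> nat -> R) : Prop :=
  (forall n i, (1 <= n)%nat -> (i <= m n)%nat -> 0 < a i n) /\
  (forall n, (1 <= n)%nat -> acc a (S (m n)) n = 1).
Definition Adm m a := Adm0 m a /\
  (forall j, digits m j -> is_lim_seq (fun c => prodQ a j c) 0).

Lemma acc_sM a k n : acc (sM a) k n = acc a k (S n).
Proof. induction k; simpl; [reflexivity| rewrite IHk; reflexivity]. Qed.

Lemma prodQ_S a j c : prodQ a j (S c) = a (j 1%nat) 1%nat * prodQ (sM a) (sS j) c.
Proof.
  induction c.
  - cbn [prodQ]. ring.
  - transitivity (prodQ a j (S c) * a (j (S (S c))) (S (S c))); [reflexivity|].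
    rewrite IHc. cbn [prodQ]. unfold sM, sS. ring.
Qed.

Lemma prodQ_ext a j j' c : (forall n, (1 <= n)%nat -> j n = j' n) ->
  prodQ a j c = prodQ a j' c.
Proof. intros H; induction c; cbn [prodQ]; [reflexivity|]. rewrite IHc, H by lia. reflexivity. Qed.

Lemma prodQ_ext2 a b j c : (forall n, (1<=n)%nat -> a (j n) n = b (j n) n) ->
  prodQ a j c = prodQ b j c.
Proof. intros H; induction c; cbn [prodQ]; [reflexivity|]. rewrite IHc, H by lia. reflexivity. Qed.

Lemma DeltaQ_ext a j j' : (forall n, (1 <= n)%nat -> j n = j' n) -> DeltaQ a j = DeltaQ a j'.
Proof.
  intros H. unfold DeltaQ. rewrite H by lia. f_equal. apply Series_ext. intro k.
  rewrite H by lia. rewrite (prodQ_ext a j j') by exact H. reflexivity.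
Qed.

Lemma Adm0_shift m a : Adm0 m a -> Adm0 (sS m) (sM a).
Proof.
  intros [H1 H2]; split.
  - intros n i Hn Hi. unfold sM. apply H1; [lia| exact Hi].
  - intros n Hn. rewrite acc_sM. apply H2. lia.
Qed.

Definition ext0 (j' : nat -> nat) : nat -> nat :=
  fun n => match n with 0%nat | 1%nat => 0%nat | S n' => j' n' end.

Lemma Adm_shift m a : Adm m a -> Adm (sS m) (sM a).
Proof.
  intros [H0 Hl]. split. apply Adm0_shift; auto.
  intros j' Hj'.
  assert (Hj : digits m (ext0 j')).
  { intros n Hn. destruct n as [|[|n]]; simpl; [lia|lia|]. apply (Hj' (S n)); lia. }
  pose proof (Hl _ Hj) as L. apply is_lim_seq_incr_1 in L.
  destruct H0 as [Hpos _].
  assert (Ha : 0 < a 0%nat 1%nat) by (apply Hpos; lia).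
  apply is_lim_seq_ext with (fun c => / a 0%nat 1%nat * prodQ a (ext0 j') (S c)).
  - intro c. rewrite prodQ_S. rewrite (prodQ_ext (sM a) (sS (ext0 j')) j').
    + replace (ext0 j' 1%nat) with 0%nat by reflexivity. field. lra.
    + intros n Hn. unfold sS, ext0. destruct n; [lia|reflexivity].
  - replace (Finite 0) with (Rbar_mult (/ a 0%nat 1%nat) 0).
    + apply is_lim_seq_scal_l. exact L.
    + simpl. f_equal; ring.
Qed.

Lemma acc_lt m a n i k : Adm0 m a -> (1 <= n)%nat -> (i < k)%nat -> (k <= S (m n))%nat ->
  acc a i n < acc a k n.
Proof.
  intros [Hp _] Hn Hik Hk. induction k as [|k IH]; [lia|]. cbn [acc].
  assert (0 < a k n) by (apply Hp; lia).
  destruct (Nat.eq_dec i k) as [->|Hne]; [lra|].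
  assert (acc a i n < acc a k n) by (apply IH; lia). lra.
Qed.

Lemma acc_le m a n i k : Adm0 m a -> (1 <= n)%nat -> (i <= k)%nat -> (k <= S (m n))%nat ->
  acc a i n <= acc a k n.
Proof. intros. destruct (Nat.eq_dec i k) as [->|]; [lra|]. left; apply (acc_lt m); auto; lia. Qed.

Lemma step_bounds m a n d : Adm0 m a -> (1 <= n)%nat -> (d <= m n)%nat ->
  0 <= acc a d n /\ acc a d n + a d n <= 1 /\ 0 < a d n.
Proof.
  intros H Hn Hd. pose proof H as [Hp Hs].
  split; [|split].
  - replace 0 with (acc a 0 n) by reflexivity. apply (acc_le m); auto; lia.
  - change (acc a d n + a d n) with (acc a (S d) n). rewrite <- (Hs n Hn).
    apply (acc_le m); auto; lia.
  - apply Hp; auto.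
Qed.

Lemma prodQ_pos m a j c : Adm0 m a -> digits m j -> 0 < prodQ a j c.
Proof.
  intros [Hp _] Hj. induction c; cbn [prodQ]; [lra|].
  apply Rmult_lt_0_compat; auto. apply Hp; [lia|]. apply Hj; lia.
Qed.

Lemma digits_shift m j : digits m j -> digits (sS m) (sS j).
Proof. intros H n Hn. unfold sS. apply H. lia. Qed.

Lemma ser_props m a j : Adm m a -> digits m j ->
  ex_series (fun k => acc a (j (k + 2)%nat) (k + 2)%nat * prodQ a j (k + 1)%nat) /\
  0 <= Series (fun k => acc a (j (k + 2)%nat) (k + 2)%nat * prodQ a j (k + 1)%nat) <= prodQ a j 1.
Proof.
  intros [H0 Hl] Hj.
  set (t := fun k => acc a (j (k + 2)%nat) (k + 2)%nat * prodQ a j (k + 1)%nat).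
  set (b := fun k => prodQ a j (k + 1)%nat - prodQ a j (k + 2)%nat).
  assert (Htb : forall k, 0 <= t k <= b k).
  { intro k. unfold t, b.
    replace (k + 2)%nat with (S (k + 1)) by lia. cbn [prodQ].
    pose proof (prodQ_pos m a j (k+1) H0 Hj).
    destruct (step_bounds m a (S (k+1)) (j (S (k+1))) H0) as [h1 [h2 h3]]; [lia| apply Hj; lia|].
    split; nra. }
  assert (Hsum : forall K, sum_n b K = prodQ a j 1 - prodQ a j (K + 2)%nat).
  { induction K.
    - rewrite sum_O. unfold b. reflexivity.
    - rewrite sum_Sn, IHK. unfold plus; simpl. unfold b.
      replace (S K + 1)%nat with (K + 2)%nat by lia. replace (S K + 2)%nat with (S (K+2)) by lia. cbn [prodQ]. match goal with |- ?x = ?y => change (@eq R x y) end. ring. }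
  assert (Hb : is_series b (prodQ a j 1)).
  { change (is_lim_seq (sum_n b) (prodQ a j 1)).
    apply is_lim_seq_ext with (fun K => prodQ a j 1 - prodQ a j (K + 2)%nat).
    - intro K; rewrite Hsum; reflexivity.
    - pose proof (Hl j Hj) as L.
      assert (L' : is_lim_seq (fun K => prodQ a j (K + 2)%nat) 0).
      { exact (proj1 (is_lim_seq_incr_n (fun c => prodQ a j c) 2 0) L). }
      pose proof (is_lim_seq_minus' _ _ _ _ (is_lim_seq_const (prodQ a j 1)) L') as L2.
      rewrite Rminus_0_r in L2. exact L2. }
  assert (Hexb : ex_series b) by (exists (prodQ a j 1); exact Hb).
  assert (Hext : ex_series t).
  { apply (@ex_series_le R_AbsRing R_CompleteNormedModule t b); auto. intro n. unfold norm; simpl.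
    rewrite Rabs_pos_eq; apply Htb. }
  split; [exact Hext|]. split.
  - replace 0 with (Series (fun n => 0 * t n)).
    + apply Series_le; auto. intro n. specialize (Htb n). lra.
    + rewrite Series_scal_l. ring.
  - rewrite <- (is_series_unique b _ Hb). apply Series_le; auto.
Qed.

Lemma DeltaQ_bounds m a j : Adm m a -> digits m j -> 0 <= DeltaQ a j <= 1.
Proof.
  intros H Hj. pose proof (ser_props m a j H Hj) as [_ [h1 h2]].
  destruct (step_bounds m a 1 (j 1%nat) (proj1 H)) as [s1 [s2 s3]]; [lia|apply Hj; lia|].
  unfold DeltaQ. cbn [prodQ] in h2. lra.
Qed.

Lemma DeltaQ_rec m a j : Adm m a -> digits m j ->
  DeltaQ a j = acc a (j 1%nat) 1%nat + a (j 1%nat) 1%nat * DeltaQ (sM a) (sS j).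
Proof.
  intros H Hj. pose proof (ser_props m a j H Hj) as [Hex _].
  unfold DeltaQ at 1. rewrite Series_incr_1 by exact Hex.
  unfold DeltaQ. rewrite acc_sM. unfold sS at 1.
  rewrite (Series_ext (fun k => acc a (j (S k + 2)%nat) (S k + 2)%nat * prodQ a j (S k + 1)%nat)
     (fun n => a (j 1%nat) 1%nat * (acc (sM a) (sS j (n + 2)%nat) (n + 2)%nat * prodQ (sM a) (sS j) (n + 1)%nat))).
  - rewrite Series_scal_l. replace (0 + 2)%nat with 2%nat by reflexivity.
    replace (prodQ a j (0 + 1)) with (a (j 1%nat) 1%nat) by (simpl; ring). ring.
  - intro k. rewrite acc_sM. replace (S k + 1)%nat with (S (k + 1)) by lia.
    rewrite prodQ_S. unfold sS. replace (S k + 2)%nat with (S (k + 2)) by lia. ring.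
Qed.

Fixpoint Lw (a : nat -> nat -> R) (j : nat -> nat) (N : nat) : R :=
  match N with
  | O => 0
  | S N' => acc a (j 1%nat) 1%nat + a (j 1%nat) 1%nat * Lw (sM a) (sS j) N'
  end.
Fixpoint Rw (a : nat -> nat -> R) (j : nat -> nat) (N : nat) : R :=
  match N with
  | O => 1
  | S N' => acc a (j 1%nat) 1%nat + a (j 1%nat) 1%nat * Rw (sM a) (sS j) N'
  end.

Lemma Rw_Lw a j N : Rw a j N - Lw a j N = prodQ a j N.
Proof.
  revert a j; induction N; intros a j; [simpl; ring|].
  rewrite prodQ_S, <- IHN. simpl. ring.
Qed.

Lemma Lw_ext a j j' N : (forall n, (1 <= n)%nat -> j n = j' n) -> Lw a j N = Lw a j' N.
Proof.
  revert a j j'; induction N; intros a j j' H; [reflexivity|]. simpl.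
  rewrite H by lia. f_equal. f_equal. apply IHN. intros n Hn. unfold sS. apply H. lia.
Qed.

Lemma Rw_ext a j j' N : (forall n, (1 <= n)%nat -> j n = j' n) -> Rw a j N = Rw a j' N.
Proof.
  revert a j j'; induction N; intros a j j' H; [reflexivity|]. simpl.
  rewrite H by lia. f_equal. f_equal. apply IHN. intros n Hn. unfold sS. apply H. lia.
Qed.

Lemma LR_bounds m a j N : Adm0 m a -> digits m j ->
  0 <= Lw a j N <= 1 /\ 0 <= Rw a j N <= 1.
Proof.
  revert m a j; induction N; intros m a j H Hj; [simpl; lra|].
  destruct (IHN (sS m) (sM a) (sS j) (Adm0_shift m a H) (digits_shift m j Hj)) as [h1 h2].
  destruct (step_bounds m a 1 (j 1%nat) H) as [s1 [s2 s3]]; [lia|apply Hj; lia|].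
  simpl. split; split; nra.
Qed.

Lemma LD_bounds m a j N : Adm m a -> digits m j ->
  Lw a j N <= DeltaQ a j <= Rw a j N.
Proof.
  revert m a j; induction N; intros m a j H Hj; [simpl; apply (DeltaQ_bounds m); auto|].
  destruct (IHN (sS m) (sM a) (sS j) (Adm_shift m a H) (digits_shift m j Hj)) as [h1 h2].
  destruct (step_bounds m a 1 (j 1%nat) (proj1 H)) as [s1 [s2 s3]]; [lia|apply Hj; lia|].
  rewrite (DeltaQ_rec m a j H Hj). simpl. split; nra.
Qed.

Lemma key1 m a d X : Adm0 m a -> (d <= m 1%nat)%nat -> 0 <= X <= 1 ->
  (acc a d 1%nat + a d 1%nat * X = 1 <-> (d = m 1%nat /\ X = 1)).
Proof.
  intros H Hd HX. destruct (step_bounds m a 1 d H) as [s1 [s2 s3]]; [lia|auto|].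
  pose proof H as [_ Hs]. specialize (Hs 1%nat ltac:(lia)).
  split.
  - intro E. destruct (Nat.eq_dec d (m 1%nat)) as [->|Hne].
    + split; auto. cbn [acc] in Hs. nra.
    + exfalso. assert (acc a (S d) 1 < acc a (S (m 1%nat)) 1) by (apply (acc_lt m); auto; lia).
      cbn [acc] in H0, Hs. nra.
  - intros [-> ->]. cbn [acc] in Hs. lra.
Qed.

Lemma key0 m a d X : Adm0 m a -> (d <= m 1%nat)%nat -> 0 <= X <= 1 ->
  (acc a d 1%nat + a d 1%nat * X = 0 <-> (d = 0%nat /\ X = 0)).
Proof.
  intros H Hd HX. destruct (step_bounds m a 1 d H) as [s1 [s2 s3]]; [lia|auto|].
  split.
  - intro E. destruct d as [|d].
    + split; auto. simpl in E. nra.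
    + exfalso. assert (acc a 0 1 < acc a (S d) 1) by (apply (acc_lt m); auto; lia).
      change (acc a 0 1) with 0 in H0. nra.
  - intros [-> ->]. simpl. ring.
Qed.

Lemma key_lt m a u v X Y : Adm0 m a -> (u <= m 1%nat)%nat -> (v <= m 1%nat)%nat ->
  0 <= X <= 1 -> 0 <= Y <= 1 ->
  (acc a u 1%nat + a u 1%nat * X < acc a v 1%nat + a v 1%nat * Y <->
   (u = v /\ X < Y) \/ ((u < v)%nat /\ ~ (v = S u /\ X = 1 /\ Y = 0))).
Proof.
  intros H Hu Hv HX HY.
  destruct (step_bounds m a 1 u H) as [s1 [s2 s3]]; [lia|auto|].
  destruct (step_bounds m a 1 v H) as [t1 [t2 t3]]; [lia|auto|].
  destruct (Compare_dec.lt_eq_lt_dec u v) as [[Hlt| ->]|Hgt].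
  - assert (acc a (S u) 1 <= acc a v 1) by (apply (acc_le m); auto; lia).
    cbn [acc] in H0. split.
    + intros Hl. right. split; auto. intros [-> [-> ->]]. cbn [acc] in Hl. lra.
    + intros [[-> _]|[_ Hn]]; [lia|].
      destruct (Rlt_le_dec (acc a u 1%nat + a u 1%nat * X) (acc a v 1%nat + a v 1%nat * Y)) as [h|h]; [exact h|].
      exfalso. apply Hn.
      assert (Hx : X = 1) by nra. assert (Hy : Y = 0) by nra.
      split; [|split; auto].
      destruct (Nat.eq_dec v (S u)) as [e|ne]; auto. exfalso.
      assert (acc a (S u) 1 < acc a v 1) by (apply (acc_lt m); auto; lia).
      cbn [acc] in H1. nra.
  - split.
    + intro h. left. split; auto. nra.
    + intros [[_ h]|[h _]]; [nra|lia].
  - assert (acc a (S v) 1 <= acc a u 1) by (apply (acc_le m); auto; lia).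
    cbn [acc] in H0. split.
    + intro h. exfalso. nra.
    + intros [[e _]|[h _]]; lia.
Qed.

Lemma indep_all m a b j j' N : Adm0 m a -> Adm0 m b -> digits m j -> digits m j' ->
  (Rw a j N = 1 <-> Rw b j N = 1) /\ (Lw a j N = 0 <-> Lw b j N = 0) /\
  (Rw a j N < Lw a j' N <-> Rw b j N < Lw b j' N).
Proof.
  revert m a b j j'; induction N; intros m a b j j' Ha Hb Hj Hj'.
  - simpl. split; [tauto|split; [tauto|]]. split; intro; lra.
  - destruct (IHN (sS m) (sM a) (sM b) (sS j) (sS j') (Adm0_shift m a Ha) (Adm0_shift m b Hb)
       (digits_shift m j Hj) (digits_shift m j' Hj')) as [I1 [I2 I3]].
    destruct (LR_bounds (sS m) (sM a) (sS j) N (Adm0_shift m a Ha) (digits_shift m j Hj)) as [A1 A2].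
    destruct (LR_bounds (sS m) (sM a) (sS j') N (Adm0_shift m a Ha) (digits_shift m j' Hj')) as [A3 A4].
    destruct (LR_bounds (sS m) (sM b) (sS j) N (Adm0_shift m b Hb) (digits_shift m j Hj)) as [B1 B2].
    destruct (LR_bounds (sS m) (sM b) (sS j') N (Adm0_shift m b Hb) (digits_shift m j' Hj')) as [B3 B4].
    assert (u1 : (j 1%nat <= m 1%nat)%nat) by (apply Hj; lia).
    assert (v1 : (j' 1%nat <= m 1%nat)%nat) by (apply Hj'; lia).
    cbn [Rw Lw].
    rewrite (key1 m a _ _ Ha u1 A2), (key1 m b _ _ Hb u1 B2).
    rewrite (key0 m a _ _ Ha u1 A1), (key0 m b _ _ Hb u1 B1).
    rewrite (key_lt m a _ _ _ _ Ha u1 v1 A2 A3), (key_lt m b _ _ _ _ Hb u1 v1 B2 B3).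
    pose proof (proj1 (IHN (sS m) (sM a) (sM b) (sS j') (sS j) (Adm0_shift m a Ha) (Adm0_shift m b Hb)
       (digits_shift m j' Hj') (digits_shift m j Hj)) ) as I4.
    pose proof (proj1 (proj2 (IHN (sS m) (sM a) (sM b) (sS j') (sS j) (Adm0_shift m a Ha) (Adm0_shift m b Hb)
       (digits_shift m j' Hj') (digits_shift m j Hj)))) as I5.
    tauto.
Qed.

Lemma lt_char m a j j' : Adm m a -> digits m j -> digits m j' ->
  (DeltaQ a j < DeltaQ a j' <-> exists N, Rw a j N < Lw a j' N).
Proof.
  intros H Hj Hj'. split.
  - intro Hlt. set (e := (DeltaQ a j' - DeltaQ a j) / 2).
    assert (He : 0 < e) by (unfold e; lra).
    pose proof (proj2 H j Hj) as L1. pose proof (proj2 H j' Hj') as L2.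
    apply is_lim_seq_spec in L1. apply is_lim_seq_spec in L2.
    destruct (L1 (mkposreal e He)) as [N1 HN1].
    destruct (L2 (mkposreal e He)) as [N2 HN2].
    exists (Nat.max N1 N2).
    specialize (HN1 (Nat.max N1 N2) ltac:(lia)). specialize (HN2 (Nat.max N1 N2) ltac:(lia)).
    simpl in HN1, HN2. rewrite Rminus_0_r in HN1, HN2.
    pose proof (Rw_Lw a j (Nat.max N1 N2)). pose proof (Rw_Lw a j' (Nat.max N1 N2)).
    pose proof (LD_bounds m a j (Nat.max N1 N2) H Hj).
    pose proof (LD_bounds m a j' (Nat.max N1 N2) H Hj').
    apply Rabs_def2 in HN1. apply Rabs_def2 in HN2. unfold e in *. lra.
  - intros [N HN].
    pose proof (LD_bounds m a j N H Hj). pose proof (LD_bounds m a j' N H Hj'). lra.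
Qed.

Lemma lt_transfer m a b j j' : Adm m a -> Adm m b -> digits m j -> digits m j' ->
  (DeltaQ a j < DeltaQ a j' <-> DeltaQ b j < DeltaQ b j').
Proof.
  intros Ha Hb Hj Hj'. rewrite (lt_char m a j j'), (lt_char m b j j') by auto.
  split; intros [N HN]; exists N;
    apply (proj2 (proj2 (indep_all m a b j j' N (proj1 Ha) (proj1 Hb) Hj Hj'))); auto.
Qed.

Lemma eq_transfer m a b j j' : Adm m a -> Adm m b -> digits m j -> digits m j' ->
  DeltaQ a j = DeltaQ a j' -> DeltaQ b j = DeltaQ b j'.
Proof.
  intros Ha Hb Hj Hj' E.
  destruct (Rtotal_order (DeltaQ b j) (DeltaQ b j')) as [h|[h|h]]; auto; exfalso.
  - apply (lt_transfer m a b j j') in h; auto. lra.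
  - apply (lt_transfer m a b j' j) in h; auto. lra.
Qed.

Fixpoint pk (a : nat -> nat -> R) (n : nat) (x : R) (k : nat) : nat :=
  match k with
  | O => O
  | S k' => if Rle_dec (acc a (S k') n) x then S k' else pk a n x k'
  end.

Lemma pk_spec a n x k : 0 <= x ->
  (pk a n x k <= k)%nat /\ acc a (pk a n x k) n <= x /\
  (forall i, (pk a n x k < i)%nat -> (i <= k)%nat -> x < acc a i n).
Proof.
  intros Hx. induction k as [|k IH].
  - simpl. split; [lia|split; [lra|]]. intros; lia.
  - cbn [pk]. destruct (Rle_dec (acc a (S k) n) x) as [h|h].
    + split; [lia|split; [exact h|]]. intros; lia.
    + destruct IH as [i1 [i2 i3]]. split; [lia|split; [exact i2|]].
      intros i Hi1 Hi2. destruct (Nat.eq_dec i (S k)) as [->|ne]; [lra|]. apply i3; lia.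
Qed.

Definition pick (m : nat -> nat) (a : nat -> nat -> R) (x : R) : nat := pk a 1%nat x (m 1%nat).
Definition nx (m : nat -> nat) (a : nat -> nat -> R) (x : R) : R :=
  (x - acc a (pick m a x) 1%nat) / a (pick m a x) 1%nat.

Lemma pick_spec m a x : Adm0 m a -> 0 <= x <= 1 ->
  (pick m a x <= m 1%nat)%nat /\ 0 <= nx m a x <= 1 /\
  x = acc a (pick m a x) 1%nat + a (pick m a x) 1%nat * nx m a x.
Proof.
  intros H Hx. destruct (pk_spec a 1 x (m 1%nat) (proj1 Hx)) as [p1 [p2 p3]].
  fold (pick m a x) in p1, p2, p3.
  destruct (step_bounds m a 1 (pick m a x) H) as [s1 [s2 s3]]; [lia|auto|].
  assert (Hup : x <= acc a (pick m a x) 1%nat + a (pick m a x) 1%nat).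
  { change (acc a (pick m a x) 1%nat + a (pick m a x) 1%nat) with (acc a (S (pick m a x)) 1%nat).
    destruct (Nat.eq_dec (pick m a x) (m 1%nat)) as [e|ne].
    - rewrite e, (proj2 H 1%nat ltac:(lia)). lra.
    - left. apply p3; lia. }
  split; [exact p1|split].
  - unfold nx. split.
    + apply Rmult_le_pos; [lra|]. left; apply Rinv_0_lt_compat; lra.
    + apply Rmult_le_reg_r with (a (pick m a x) 1%nat); auto.
      unfold Rdiv. rewrite Rmult_assoc, Rinv_l by lra. lra.
  - unfold nx. field. lra.
Qed.

Fixpoint dg (m : nat -> nat) (a : nat -> nat -> R) (x : R) (n : nat) : nat :=
  match n with
  | O => O
  | S n' => match n' with
            | O => pick m a x
            | _ => dg (sS m) (sM a) (nx m a x) n'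
            end
  end.

Lemma dg_S m a x n : (1 <= n)%nat -> dg m a x (S n) = dg (sS m) (sM a) (nx m a x) n.
Proof. intros; destruct n; [lia|reflexivity]. Qed.

Lemma dg_digits m a x : Adm0 m a -> 0 <= x <= 1 -> digits m (dg m a x).
Proof.
  intros H Hx n. revert m a x H Hx. induction n; intros m a x H Hx Hn; [lia|].
  destruct n as [|n].
  - simpl. apply (pick_spec m a x H Hx).
  - rewrite dg_S by lia. destruct (pick_spec m a x H Hx) as [_ [h _]].
    apply (IHn (sS m) (sM a) (nx m a x) (Adm0_shift m a H) h). lia.
Qed.

Lemma dg_bounds m a x N : Adm0 m a -> 0 <= x <= 1 ->
  Lw a (dg m a x) N <= x <= Rw a (dg m a x) N.
Proof.
  revert m a x; induction N; intros m a x H Hx; [simpl; lra|].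
  destruct (pick_spec m a x H Hx) as [h1 [h2 h3]].
  destruct (step_bounds m a 1 (pick m a x) H) as [s1 [s2 s3]]; [lia|auto|].
  destruct (IHN (sS m) (sM a) (nx m a x) (Adm0_shift m a H) h2) as [i1 i2].
  cbn [Lw Rw].
  rewrite (Lw_ext (sM a) (sS (dg m a x)) (dg (sS m) (sM a) (nx m a x))).
  rewrite (Rw_ext (sM a) (sS (dg m a x)) (dg (sS m) (sM a) (nx m a x))).
  - change (dg m a x 1%nat) with (pick m a x).
    assert (a (pick m a x) 1%nat * Lw (sM a) (dg (sS m) (sM a) (nx m a x)) N <= a (pick m a x) 1%nat * nx m a x)
      by (apply Rmult_le_compat_l; lra).
    assert (a (pick m a x) 1%nat * nx m a x <= a (pick m a x) 1%nat * Rw (sM a) (dg (sS m) (sM a) (nx m a x)) N)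
      by (apply Rmult_le_compat_l; lra).
    lra.
  - intros n Hn. unfold sS. apply dg_S; auto.
  - intros n Hn. unfold sS. apply dg_S; auto.
Qed.

Lemma exists_rep m a x : Adm m a -> 0 <= x <= 1 ->
  exists j, digits m j /\ DeltaQ a j = x.
Proof.
  intros H Hx. exists (dg m a x). pose proof (dg_digits m a x (proj1 H) Hx) as Hd.
  split; auto.
  destruct (Req_dec (DeltaQ a (dg m a x)) x) as [e|ne]; auto. exfalso.
  set (e := Rabs (DeltaQ a (dg m a x) - x)).
  assert (He : 0 < e) by (apply Rabs_pos_lt; lra).
  pose proof (proj2 H _ Hd) as L. apply is_lim_seq_spec in L.
  destruct (L (mkposreal e He)) as [N HN]. specialize (HN N (le_n N)).
  simpl in HN. rewrite Rminus_0_r in HN. apply Rabs_def2 in HN.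
  pose proof (Rw_Lw a (dg m a x) N). pose proof (LD_bounds m a _ N H Hd).
  pose proof (dg_bounds m a x N (proj1 H) Hx).
  assert (Rabs (DeltaQ a (dg m a x) - x) <= prodQ a (dg m a x) N).
  { apply Rabs_le. lra. }
  unfold e in *. lra.
Qed.

Definition sig (m : nat -> nat) (i : nat -> nat) : nat -> nat :=
  fun n => if Nat.odd n then i n else (m n - i n)%nat.

Lemma prodQ_ptilde m p i c : prodQ (ptilde m p) i c = prodQ p (sig m i) c.
Proof.
  induction c; cbn [prodQ]; [reflexivity|]. rewrite IHc. unfold ptilde, sig.
  destruct (Nat.odd (S c)); reflexivity.
Qed.

Lemma Fdigits_eq m p i : Fdigits m p i = DeltaQ p (sig m i).
Proof.
  unfold Fdigits, DeltaQ. f_equal. apply Series_ext. intro k.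
  rewrite prodQ_ptilde. unfold btilde, sig. destruct (Nat.odd (k + 2)); reflexivity.
Qed.

Lemma sig_digits m i : digits m i -> digits m (sig m i).
Proof. intros H n Hn. unfold sig. destruct (Nat.odd n); [apply H; auto|lia]. Qed.

Lemma F_rep m q p x : Adm m q -> 0 <= x <= 1 ->
  exists i, digits m i /\ x = DeltaQ q (sig m i) /\ F m q p x = DeltaQ p (sig m i).
Proof.
  intros H Hx.
  assert (Hex : exists i, nega_rep m q i x).
  { destruct (exists_rep m q x H Hx) as [j [Hj E]]. exists (sig m j). split.
    - apply sig_digits; auto.
    - rewrite <- E. apply DeltaQ_ext. intros n Hn. unfold sig.
      destruct (Nat.odd n); [reflexivity|]. specialize (Hj n Hn). lia. }
  pose proof (epsilon_spec (inhabits (fun _ : nat => O)) (fun i => nega_rep m q i x) Hex) as [Hd E].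
  exists (epsilon (inhabits (fun _ : nat => O)) (fun i => nega_rep m q i x)).
  split; [exact Hd|split; [exact E|]].
  unfold F. apply Fdigits_eq.
Qed.

Theorem mainTheorem6 (m : nat -> nat) (q p : nat -> nat -> R) :
  Q_admissible m q ->
  P_admissible m p ->
  (forall n i, (1 <= n)%nat -> (i <= m n)%nat -> 0 < p i n) ->
  (forall x, 0 <= x <= 1 -> 0 <= F m q p x <= 1) /\
  (forall x y, 0 <= x <= 1 -> 0 <= y <= 1 -> F m q p x = F m q p y -> x = y) /\
  (forall y, 0 <= y <= 1 -> exists x, 0 <= x <= 1 /\ F m q p x = y).
Proof.
  intros HQ HP Hpos.
  assert (Aq : Adm m q).
  { destruct HQ as [h1 [h2 h3]]. split; [split|]; auto. }
  assert (Ap : Adm m p).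
  { destruct HP as [h1 [h2 [h3 h4]]]. split; [split|]; auto.
    intros j Hj. apply is_lim_seq_ext with (2 := h3 j Hj). intro c.
    apply prodQ_ext2. intros n Hn. apply Rabs_pos_eq. left. apply Hpos; auto. }
  split; [|split].
  - intros x Hx. destruct (F_rep m q p x Aq Hx) as [i [Hi [E1 E2]]].
    rewrite E2. apply (DeltaQ_bounds m); auto. apply sig_digits; auto.
  - intros x y Hx Hy E.
    destruct (F_rep m q p x Aq Hx) as [i [Hi [E1 E2]]].
    destruct (F_rep m q p y Aq Hy) as [i' [Hi' [E1' E2']]].
    rewrite E1, E1'. apply (eq_transfer m p q); auto; try apply sig_digits; auto.
    congruence.
  - intros y Hy. destruct (exists_rep m p y Ap Hy) as [j [Hj E]].
    exists (DeltaQ q j). split. apply (DeltaQ_bounds m); auto.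
    destruct (F_rep m q p (DeltaQ q j) Aq (DeltaQ_bounds m q j Aq Hj)) as [i [Hi [E1 E2]]].
    rewrite E2, <- E. apply (eq_transfer m q p); auto; try apply sig_digits; auto.
Qed.
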